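(* Let $\mathcal O$ be a phylogenetic quiver with evolutionary sequence $(\mathcal O_m,\le)_{m\ge0}$, $p:\mathcal O_m\to\mathcal O_{m-1}$. Let $a\in\mathcal O_m$, $b\in\mathcal O_n$ with $m,n\ge0$. Then: (i) $a\le b$ if and only if $m\le n$ and $a\le p^{n-m}(b)$ in $\mathcal O_m$ (where $p^0$ is the identity); (ii) if $m=n=0$, then $a\le b\iff a=b$; (iii) if $m=n\ge1$ and $a\le b$, then $p(a)=p(b)$; (iv) if $n=m+1$, then $p(b)=a$ if and only if there is an edge $B\to A$ in $\mathcal O$ with $A,B$ vertices of $\mathcal O$ representing $a,b$ respectively.
   Context: A quiver consists of a class of vertices and, for each ordered pair of vertices $(A,B)$, a set of edges $A\to B$ (loops and multiple edges allowed). An evolution of length $m\ge 0$ is a sequence $A_0\leftarrow A_1\leftarrow\cdots\leftarrow A_m$ of vertices together with edges $A_k\to A_{k-1}$ ($1\le k\le m$); $A_0$ is its initial and $A_m$ its terminal vertex. Write $A\le B$ ($A$ is an ancestor of $B$) if there is an evolution with initial vertex $A$ and terminal vertex $B$; $A,B$ are isotypic ($A\sim B$) if $A\le B$ and $B\le A$. A vertex $A$ is primitive if every ancestor of $A$ is isotypic to $A$. A full evolution for $X$ is an evolution with primitive initial vertex and terminal vertex $X$. The height $h(X)$ is the smallest length of a full evolution for $X$ ($\infty$ if none). An evolution $\alpha=(A_0\leftarrow\cdots\leftarrow A_m)$ embeds in $\beta=(B_0\leftarrow\cdots\leftarrow B_n)$ if $m\le n$ and there are $0\le r_0<\cdots<r_m\le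 n$ with $A_k\sim B_{r_k}$. A universal evolution for $X$ is a full evolution for $X$ embedding in every full evolution for $X$; $X$ is phylogenetic if one exists. A quiver is monotonous if $h(A)\ge h(B)$ for every edge $A\to B$; small if its isotypy classes form a set; phylogenetic if small, monotonous, and all vertices phylogenetic. Evolutionary sequence of a phylogenetic quiver $\mathcal O$: let $\mathcal O_m$ be the set of isotypy classes $[A]$ of vertices of height $m$, with the relation $[A]\le[B]$ iff $A\le B$ (a partial order on the set of all isotypy classes); for $m\ge1$ the parental map $p:\mathcal O_m\to\mathcal O_{m-1}$ is $p([A])=[A_{m-1}]$ where $A_0\leftarrow\cdots\leftarrow A_{m-1}\leftarrow A_m=A$ is any universal evolution for $A$ (this is well defined). *)

(* Defs.v *)
From Stdlib Require Import Arith.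

Section Quiver.
Context {V : Type} (E : V -> V -> Type).

(* An evolution A_0 <- A_1 <- ... <- A_m : length m, vertices vtx 0..vtx m,
   and for 1 <= k <= m an edge A_k -> A_{k-1}. (vtx beyond m is irrelevant.) *)
Record evolution := Evolution {
  len : nat;
  vtx : nat -> V;
  edg : forall k, k < len -> E (vtx (S k)) (vtx k)
}.

Definition initial (a : evolution) : V := vtx a 0.
Definition terminal (a : evolution) : V := vtx a (len a).

Definition ancestor (A B : V) : Prop :=
  exists a : evolution, initial a = A /\ terminal a = B.

Definition isotypic (A B : V) : Prop := ancestor A B /\ ancestor B A.

Definition primitive (A : V) : Prop :=
  forall B, ancestor B A -> isotypic B A.

Definition full_evolution (X : V) (a : evolution) : Prop :=
  primitive (initial a) /\ terminal a = X.

(* height E X m : h(X) = m (finite); h(X) = infinity iff no such m *)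
Definition height (X : V) (m : nat) : Prop :=
  (exists a, full_evolution X a /\ len a = m) /\
  (forall a, full_evolution X a -> m <= len a).

Definition embeds (a b : evolution) : Prop :=
  len a <= len b /\
  exists r : nat -> nat,
    (forall k, k < len a -> r k < r (S k)) /\
    r (len a) <= len b /\
    (forall k, k <= len a -> isotypic (vtx a k) (vtx b (r k))).

Definition universal_evolution (X : V) (a : evolution) : Prop :=
  full_evolution X a /\ forall b, full_evolution X b -> embeds a b.

Definition phylogenetic_vertex (X : V) : Prop :=
  exists a, universal_evolution X a.

(* h(A) >= h(B) for every edge A -> B (with the convention h = infinity
   when no full evolution exists) *)
Definition monotonous : Prop :=
  forall A B (e : E A B) m, height A m -> exists n, height B n /\ n <= m.

(* Smallness (isotypy classes form a set) is automatic for V : Type. *)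
Definition phylogenetic_quiver : Prop :=
  monotonous /\ forall X, phylogenetic_vertex X.

(* parental map on representatives: p([B]) = [C] iff C is isotypic to the
   penultimate vertex B_{n-1} of a universal evolution for B *)
Definition parent (B C : V) : Prop :=
  exists a, universal_evolution B a /\ 1 <= len a /\
            isotypic (vtx a (len a - 1)) C.

Fixpoint piter (k : nat) (B C : V) : Prop :=
  match k with
  | 0 => isotypic B C
  | S k' => exists D, parent B D /\ piter k' D C
  end.

End Quiver.

(* Main.v *)
Require Import Defs.
From Stdlib Require Import Arith Lia.

Section S.
Context {V : Type} (E : V -> V -> Type).

Local Notation L := (len E).
Local Notation Vx := (vtx E).
Local Notation anc := (ancestor E).
Local Notation iso := (isotypic E).

Lemma take_edg (a : evolution E) (j : nat) (H : j <= L a) :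
  forall k, k < j -> E (Vx a (S k)) (Vx a k).
Proof. intros k Hk. refine (edg E _ _ _); lia. Qed.
Definition take a j H : evolution E := Evolution E j (Vx a) (take_edg a j H).

Lemma seg_edg (a : evolution E) (i j : nat) (H : j <= L a) :
  forall k, k < j - i -> E (Vx a (i + S k)) (Vx a (i + k)).
Proof. intros k Hk. rewrite Nat.add_succ_r. refine (edg E _ _ _); lia. Qed.
Definition seg a i j H : evolution E :=
  Evolution E (j - i) (fun t => Vx a (i + t)) (seg_edg a i j H).

Definition cv (a b : evolution E) (i : nat) : V :=
  if i <=? L a then Vx a i else Vx b (i - L a).

Lemma concat_edg (a b : evolution E) (H : Vx a (L a) = Vx b 0) :
  forall k, k < L a + L b -> E (cv a b (S k)) (cv a b k).
Proof.
  intros k Hk. unfold cv.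
  destruct (Nat.leb_spec0 (S k) (L a)); destruct (Nat.leb_spec0 k (L a)).
  - refine (edg E _ _ _); lia.
  - exfalso; lia.
  - assert (k = L a) by lia. subst k.
    replace (S (L a) - L a) with 1 by lia. rewrite H.
    refine (edg E _ _ _); lia.
  - replace (S k - L a) with (S (k - L a)) by lia. refine (edg E _ _ _); lia.
Qed.
Definition concat a b H : evolution E :=
  Evolution E (L a + L b) (cv a b) (concat_edg a b H).

Lemma cv_lo a b i : i <= L a -> cv a b i = Vx a i.
Proof. intros. unfold cv. destruct (Nat.leb_spec0 i (L a)); [reflexivity|lia]. Qed.
Lemma cv_hi a b i : Vx a (L a) = Vx b 0 -> L a <= i -> cv a b i = Vx b (i - L a).
Proof.
  intros H Hi. unfold cv. destruct (Nat.leb_spec0 i (L a)).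
  - assert (i = L a) by lia. subst i. rewrite Nat.sub_diag. exact H.
  - reflexivity.
Qed.

Lemma concat_initial a b H : initial E (concat a b H) = initial E a.
Proof. unfold initial; simpl. apply cv_lo. lia. Qed.
Lemma concat_terminal a b H : terminal E (concat a b H) = terminal E b.
Proof. unfold terminal; simpl. rewrite cv_hi by (auto; lia).
  f_equal. lia. Qed.

Definition svtx (A B : V) (i : nat) : V := match i with 0 => A | _ => B end.
Lemma single_edg (A B : V) (e : E B A) : forall k, k < 1 -> E (svtx A B (S k)) (svtx A B k).
Proof. intros k Hk. destruct k; [exact e | exfalso; lia]. Qed.
Definition single A B e : evolution E := Evolution E 1 (svtx A B) (single_edg A B e).

Lemma nil_edg (A : V) : forall k, k < 0 -> E ((fun _ => A) (S k)) ((fun _ => A) k).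
Proof. intros; exfalso; lia. Qed.
Definition nilev A : evolution E := Evolution E 0 (fun _ => A) (nil_edg A).

Lemma anc_refl A : anc A A.
Proof. exists (nilev A). split; reflexivity. Qed.

Lemma anc_trans A B C : anc A B -> anc B C -> anc A C.
Proof.
  intros [a [Ha1 Ha2]] [b [Hb1 Hb2]].
  assert (H : Vx a (L a) = Vx b 0).
  { unfold initial, terminal in *. congruence. }
  exists (concat a b H). split.
  - rewrite concat_initial. exact Ha1.
  - rewrite concat_terminal. exact Hb2.
Qed.

Lemma anc_seg c i j : i <= j -> j <= L c -> anc (Vx c i) (Vx c j).
Proof.
  intros Hij Hj. exists (seg c i j Hj). unfold initial, terminal; simpl.
  split; f_equal; lia.
Qed.

Lemma iso_refl A : iso A A.
Proof. split; apply anc_refl. Qed.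
Lemma iso_sym A B : iso A B -> iso B A.
Proof. intros [h1 h2]; split; auto. Qed.
Lemma iso_trans A B C : iso A B -> iso B C -> iso A C.
Proof. intros [h1 h2] [h3 h4]; split; eapply anc_trans; eauto. Qed.

Lemma edge_anc A B (e : E B A) : anc A B.
Proof. exists (single A B e). split; reflexivity. Qed.


Lemma r_mono (r : nat -> nat) n : (forall k, k < n -> r k < r (S k)) ->
  forall k j, k <= j -> j <= n -> r k + (j - k) <= r j.
Proof.
  intros H k j h1 h2. induction j.
  - assert (k = 0) by lia. subst. simpl. lia.
  - destruct (Nat.eq_dec k (S j)).
    + subst. rewrite Nat.sub_diag. lia.
    + specialize (IHj ltac:(lia) ltac:(lia)). specialize (H j ltac:(lia)). lia.
Qed.

Lemma r_ge (r : nat -> nat) n : (forall k, k < n -> r k < r (S k)) ->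
  forall k, k <= n -> k <= r k.
Proof. intros H k hk. pose proof (r_mono r n H 0 k ltac:(lia) hk). lia. Qed.

Context (HO : phylogenetic_quiver E).
Local Set Default Proof Using "All".

Local Notation height := (height E).
Local Notation univ := (universal_evolution E).
Local Notation full := (full_evolution E).

Lemma height_unique X m m' : height X m -> height X m' -> m = m'.
Proof.
  intros [[a [Ha1 Ha2]] Hm] [[b [Hb1 Hb2]] Hm'].
  specialize (Hm b Hb1). specialize (Hm' a Ha1). lia.
Qed.

Lemma univ_height X a : univ X a -> height X (L a).
Proof.
  intros [Hf Hu]. split.
  - exists a. auto.
  - intros b Hb. destruct (Hu b Hb) as [h _]. exact h.
Qed.

Lemma univ_exists X : exists a, univ X a.
Proof. destruct HO as [_ H]. apply H. Qed.

Lemma height_exists X : exists m, height X m.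
Proof. destruct (univ_exists X) as [a Ha]. eexists; apply univ_height; eauto. Qed.

Lemma univ_len X a m : univ X a -> height X m -> L a = m.
Proof. intros H1 H2. apply (height_unique X); auto. apply univ_height; auto. Qed.

Lemma anc_height X Y m n : anc X Y -> height X m -> height Y n -> m <= n.
Proof.
  intros [c [Hc1 Hc2]] HX HY. unfold initial, terminal in *.
  assert (G : forall i, i <= L c -> forall n', height (Vx c i) n' -> m <= n').
  { induction i; intros hi n' Hn'.
    - rewrite Hc1 in Hn'. rewrite (height_unique _ _ _ HX Hn'). lia.
    - destruct HO as [Hmon _].
      destruct (Hmon _ _ (edg E c i ltac:(lia)) n' Hn') as [n'' [H1 H2]].
      specialize (IHi ltac:(lia) n'' H1). lia. }
  rewrite <- Hc2 in HY. apply (G (L c)); auto.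
Qed.

Lemma iso_height X Y m n : iso X Y -> height X m -> height Y n -> m = n.
Proof.
  intros [h1 h2] H1 H2. pose proof (anc_height _ _ _ _ h1 H1 H2).
  pose proof (anc_height _ _ _ _ h2 H2 H1). lia.
Qed.

Lemma take_full X a j (H : j <= L a) : full X a -> full (Vx a j) (take a j H).
Proof. intros [Hp _]. split; [exact Hp | reflexivity]. Qed.

Lemma univ_vtx_height X a k : univ X a -> k <= L a -> height (Vx a k) k.
Proof.
  intros [Hf Hu] hk. split.
  - exists (take a k hk). split; [apply (take_full X); auto | reflexivity].
  - intros d [Hd1 Hd2].
    assert (J : Vx d (L d) = Vx (seg a k (L a) (le_n _)) 0).
    { simpl. unfold terminal in Hd2. rewrite Hd2. f_equal. lia. }
    set (c := concat d _ J).
    assert (Hc : full X c).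
    { split.
      - unfold c. rewrite concat_initial. exact Hd1.
      - unfold c. rewrite concat_terminal. unfold terminal; simpl.
        destruct Hf as [_ Hf]. unfold terminal in Hf. rewrite <- Hf. f_equal. lia. }
    destruct (Hu c Hc) as [Hl _]. unfold c in Hl. simpl in Hl. lia.
Qed.


Lemma univ_unique X a b : univ X a -> univ X b ->
  L a = L b /\ forall k, k <= L a -> iso (Vx a k) (Vx b k).
Proof.
  intros Ha Hb.
  assert (Hl : L a = L b).
  { apply (height_unique X); apply univ_height; auto. }
  split; auto.
  destruct Ha as [_ Hu]. destruct Hb as [Hbf _].
  destruct (Hu b Hbf) as [_ [r [Hr1 [Hr2 Hr3]]]].
  intros k hk.
  pose proof (r_mono r (L a) Hr1 k (L a) hk (le_n _)).
  pose proof (r_ge r (L a) Hr1 k hk).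
  assert (Hk : r k = k) by lia. specialize (Hr3 k hk). rewrite Hk in Hr3. exact Hr3.
Qed.

Lemma univ_take X a j (H : j <= L a) : univ X a -> univ (Vx a j) (take a j H).
Proof.
  intros [Hf Hu]. split.
  - apply (take_full X). auto.
  - intros d [Hd1 Hd2].
    assert (J : Vx d (L d) = Vx (seg a j (L a) (le_n _)) 0).
    { simpl. unfold terminal in Hd2. rewrite Hd2. f_equal. lia. }
    set (c := concat d _ J).
    assert (Hc : full X c).
    { split.
      - unfold c. rewrite concat_initial. exact Hd1.
      - unfold c. rewrite concat_terminal. unfold terminal; simpl.
        destruct Hf as [_ Hf]. unfold terminal in Hf. rewrite <- Hf. f_equal. lia. }
    destruct (Hu c Hc) as [_ [r [Hr1 [Hr2 Hr3]]]].
    simpl in Hr2.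
    pose proof (r_mono r (L a) Hr1 j (L a) H (le_n _)).
    assert (Hrj : r j <= L d) by lia.
    pose proof (r_ge r (L a) Hr1 j H).
    split; simpl; [lia|].
    exists r. split; [|split].
    + intros k hk. apply Hr1. lia.
    + exact Hrj.
    + intros k hk.
      pose proof (r_mono r (L a) Hr1 k j hk H).
      specialize (Hr3 k ltac:(lia)). unfold c in Hr3; simpl in Hr3.
      rewrite cv_lo in Hr3 by lia. exact Hr3.
Qed.

Lemma univ_anc X Y x y : anc X Y -> univ X x -> univ Y y -> L x = L y ->
  forall j, j < L x -> iso (Vx y j) (Vx x j).
Proof.
  intros [g [Hg1 Hg2]] Hx Hy Hl j hj.
  assert (J : Vx x (L x) = Vx g 0).
  { destruct Hx as [[_ Hx] _]. unfold initial, terminal in *. congruence. }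
  set (c := concat x g J).
  assert (Hc : full Y c).
  { split.
    - unfold c. rewrite concat_initial. destruct Hx as [[Hx _] _]. exact Hx.
    - unfold c. rewrite concat_terminal. exact Hg2. }
  destruct Hy as [Hyf Hu]. destruct (Hu c Hc) as [_ [r [Hr1 [Hr2 Hr3]]]].
  simpl in Hr2.
  assert (hjy : j <= L y) by lia.
  specialize (Hr3 j hjy).
  pose proof (r_mono r (L y) Hr1 j (L y) hjy (le_n _)).
  pose proof (r_ge r (L y) Hr1 j hjy).
  destruct (Nat.lt_ge_cases (r j) (L x)) as [Hlt | Hge].
  - assert (Hv : Vx c (r j) = Vx x (r j)) by (unfold c; simpl; apply cv_lo; lia).
    rewrite Hv in Hr3.
    pose proof (univ_vtx_height _ _ _ (conj Hyf Hu) hjy) as h1.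
    pose proof (univ_vtx_height _ _ (r j) Hx ltac:(lia)) as h2.
    pose proof (iso_height _ _ _ _ Hr3 h1 h2).
    rewrite <- H1 in Hr3. exact Hr3.
  - exfalso.
    assert (A1 : anc (Vx c (L x)) (Vx c (r j))).
    { apply anc_seg; simpl; lia. }
    assert (Hv : Vx c (L x) = X).
    { unfold c; simpl. rewrite cv_lo by lia. destruct Hx as [[_ Hx] _]. exact Hx. }
    rewrite Hv in A1.
    assert (A2 : anc X (Vx y j)) by (eapply anc_trans; [exact A1 | apply Hr3]).
    pose proof (univ_vtx_height _ _ _ (conj Hyf Hu) hjy) as h1.
    pose proof (anc_height _ _ _ _ A2 (univ_height _ _ Hx) h1). lia.
Qed.

Lemma univ_iso X Y x y : iso X Y -> univ X x -> univ Y y ->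
  L x = L y /\ forall j, j <= L x -> iso (Vx x j) (Vx y j).
Proof.
  intros Hi Hx Hy.
  assert (Hl : L x = L y).
  { apply (iso_height X Y); auto; apply univ_height; auto. }
  split; auto. intros j hj.
  destruct (Nat.eq_dec j (L x)).
  - subst j. destruct Hx as [[_ Hx] _]. destruct Hy as [[_ Hy] _].
    unfold terminal in *. rewrite Hx. rewrite Hl, Hy. exact Hi.
  - apply iso_sym. apply (univ_anc X Y); auto. apply Hi. lia.
Qed.


Lemma parent_char B C a : parent E B C -> univ B a ->
  1 <= L a /\ iso C (Vx a (L a - 1)).
Proof.
  intros [a0 [Ha0 [H1 H2]]] Ha.
  destruct (univ_unique B a0 a Ha0 Ha) as [Hl Hk].
  split; [lia|]. rewrite <- Hl.
  eapply iso_trans; [apply iso_sym; exact H2 | apply Hk; lia].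
Qed.

Lemma piter_char k : forall B a C, univ B a -> k <= L a ->
  (piter E k B C <-> iso C (Vx a (L a - k))).
Proof.
  induction k; intros B a C Ha hk.
  - simpl. rewrite Nat.sub_0_r.
    assert (Hb : Vx a (L a) = B) by (destruct Ha as [[_ h] _]; exact h).
    rewrite Hb. split; apply iso_sym.
  - simpl.
    assert (H : L a - 1 <= L a) by lia.
    pose proof (univ_take B a (L a - 1) H Ha) as Ha'.
    split.
    + intros [D [HD Hk]].
      destruct (parent_char B D a HD Ha) as [_ HDP].
      destruct (univ_exists D) as [d Hd].
      destruct (univ_iso _ _ _ _ (iso_sym _ _ HDP) Ha' Hd) as [Hl Hj].
      simpl in Hl, Hj.
      apply (IHk D d C Hd ltac:(lia)) in Hk.
      eapply iso_trans; [exact Hk|].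
      replace (L a - S k) with (L d - k) by lia.
      apply iso_sym. apply Hj. lia.
    + intros HC. exists (Vx a (L a - 1)). split.
      * exists a. split; [exact Ha | split; [lia | apply iso_refl]].
      * apply (IHk _ _ C Ha'); simpl; [lia|].
        replace (L a - 1 - k) with (L a - S k) by lia. exact HC.
Qed.

Lemma edge_lemma A' B' (e : E B' A') a b : univ A' a -> univ B' b ->
  L b = S (L a) -> iso (Vx b (L a)) A'.
Proof.
  intros Ha Hb Hl.
  assert (J : Vx a (L a) = Vx (single A' B' e) 0).
  { simpl. destruct Ha as [[_ h] _]. exact h. }
  set (c := concat a _ J).
  assert (Hc : full B' c).
  { split.
    - unfold c. rewrite concat_initial. destruct Ha as [[h _] _]. exact h.
    - unfold c. rewrite concat_terminal. reflexivity. }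
  destruct Hb as [_ Hu]. destruct (Hu c Hc) as [_ [r [Hr1 [Hr2 Hr3]]]].
  simpl in Hr2.
  pose proof (r_mono r (L b) Hr1 (L a) (L b) ltac:(lia) (le_n _)).
  pose proof (r_ge r (L b) Hr1 (L a) ltac:(lia)).
  assert (Hr : r (L a) = L a) by lia.
  specialize (Hr3 (L a) ltac:(lia)). rewrite Hr in Hr3.
  unfold c in Hr3; simpl in Hr3. rewrite cv_lo in Hr3 by lia.
  destruct Ha as [[_ h] _]. unfold terminal in h. rewrite h in Hr3. exact Hr3.
Qed.

End S.


Theorem theorem7p1 (V : Type) (E : V -> V -> Type)
  (HO : phylogenetic_quiver E) (A B : V) (m n : nat)
  (hA : height E A m) (hB : height E B n) :
  (* (i) *)
  (ancestor E A B <->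
     m <= n /\ exists C, piter E (n - m) B C /\ ancestor E A C) /\
  (* (ii) *)
  (m = 0 -> n = 0 -> (ancestor E A B <-> isotypic E A B)) /\
  (* (iii) *)
  (m = n -> 1 <= m -> ancestor E A B ->
     forall C D, parent E A C -> parent E B D -> isotypic E C D) /\
  (* (iv) *)
  (n = S m ->
     ((exists C, parent E B C /\ isotypic E C A) <->
      exists (A' B' : V) (_ : E B' A'), isotypic E A' A /\ isotypic E B' B)).
Proof.
  destruct (univ_exists E HO A) as [al Hal].
  destruct (univ_exists E HO B) as [be Hbe].
  pose proof (univ_len E HO A al m Hal hA) as Hlal.
  pose proof (univ_len E HO B be n Hbe hB) as Hlbe.
  assert (TA : vtx E al (len E al) = A) by (destruct Hal as [[_ h] _]; exact h).
  assert (TB : vtx E be (len E be) = B) by (destruct Hbe as [[_ h] _]; exact h).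
  split; [|split; [|split]].
  - split.
    + intros Hanc. pose proof (anc_height E HO A B m n Hanc hA hB) as Hmn.
      split; [exact Hmn|]. exists (vtx E be m). split.
      * apply (piter_char E HO _ B be); [exact Hbe | lia |].
        replace (len E be - (n - m)) with m by lia. apply iso_refl.
      * destruct Hanc as [g [Hg1 Hg2]].
        assert (J : vtx E al (len E al) = vtx E g 0).
        { unfold initial in Hg1. congruence. }
        set (c := concat E al g J).
        assert (Hc : full_evolution E B c).
        { split.
          - unfold c. rewrite concat_initial. destruct Hal as [[h _] _]. exact h.
          - unfold c. rewrite concat_terminal. exact Hg2. }
        destruct Hbe as [_ Hu]. destruct (Hu c Hc) as [_ [r [Hr1 [Hr2 Hr3]]]].
        simpl in Hr2.
        pose proof (r_mono r (len E be) Hr1 m (len E be) ltac:(lia) (le_n _)).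
        pose proof (r_ge r (len E be) Hr1 m ltac:(lia)).
        assert (A1 : ancestor E (vtx E c m) (vtx E c (r m))).
        { apply anc_seg; simpl; lia. }
        assert (Hv : vtx E c m = A).
        { unfold c; simpl. rewrite cv_lo by lia. rewrite <- Hlal. exact TA. }
        rewrite Hv in A1.
        eapply anc_trans; [exact A1|]. apply (Hr3 m ltac:(lia)).
    + intros [Hmn [C [HC HAC]]].
      apply (piter_char E HO (n - m) B be C Hbe ltac:(lia)) in HC.
      replace (len E be - (n - m)) with m in HC by lia.
      eapply anc_trans; [exact HAC|]. eapply anc_trans; [apply HC|].
      rewrite <- TB. apply anc_seg; lia.
  - intros Hm Hn. split.
    + intros Hanc. rewrite Hn in hB.
      destruct hB as [[b [[Hp Ht] Hl]] _].
      unfold initial, terminal in *. rewrite Hl in Ht. rewrite Ht in Hp.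
      apply Hp. exact Hanc.
    + intros [h _]. exact h.
  - intros Hmn H1 Hanc C D HC HD.
    destruct (parent_char E HO A C al HC Hal) as [_ HC'].
    destruct (parent_char E HO B D be HD Hbe) as [_ HD'].
    pose proof (univ_anc E HO A B al be Hanc Hal Hbe ltac:(lia) (len E al - 1) ltac:(lia)) as K.
    eapply iso_trans; [exact HC'|]. apply iso_sym.
    eapply iso_trans; [exact HD'|]. replace (len E be - 1) with (len E al - 1) by lia.
    exact K.
  - intros Hn. split.
    + intros [C [[a0 [Ha0 [H1 H2]]] HCA]].
      exists (vtx E a0 (len E a0 - 1)), (vtx E a0 (S (len E a0 - 1))),
        (edg E a0 (len E a0 - 1) ltac:(lia)).
      split.
      * eapply iso_trans; [exact H2 | exact HCA].
      * replace (S (len E a0 - 1)) with (len E a0) by lia.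
        destruct Ha0 as [[_ h] _]. unfold terminal in h. rewrite h. apply iso_refl.
    + intros [A' [B' [e [H1 H2]]]].
      destruct (univ_exists E HO A') as [a' Ha'].
      destruct (univ_exists E HO B') as [b' Hb'].
      assert (La' : len E a' = m).
      { apply (iso_height E HO A' A); auto. apply univ_height; auto. }
      destruct (univ_iso E HO B' B b' be H2 Hb' Hbe) as [Lb' Hj].
      pose proof (edge_lemma E HO A' B' e a' b' Ha' Hb' ltac:(lia)) as K.
      exists (vtx E be m). split.
      * exists be. split; [exact Hbe | split; [lia|]].
        replace (len E be - 1) with m by lia. apply iso_refl.
      * eapply iso_trans; [apply iso_sym; apply Hj; lia|].
        rewrite <- La'. eapply iso_trans; [exact K | exact H1].
Qed.
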